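(* In the modal logic $\mathrm{SN}$ (defined in the context): if $\vdash B\leftrightarrow C$ then $\vdash A[p/B]\leftrightarrow A[p/C]$ for every formula $A$ and atom $p$, where $A[p/B]$ denotes the result of substituting $B$ for every occurrence of $p$ in $A$.
   Context: $\mathrm{SN}$ is the logic whose formulas are built from propositional atoms $p$, constants $\top,\bot$ and a propositional constant $t$, using $\neg,\wedge,\vee,\to$ and a unary connective $N$ (which may be applied to any formula and iterated). Its theorems ($\vdash A$) are generated by: all classical tautologies; the axioms (K) $N(A\wedge B)\leftrightarrow NA\vee NB$; (F) $\neg NA\leftrightarrow N\neg A$; (C) $A\to NNA$; (A) $t\to(p\to N\neg p)$ for atoms $p$; (T) $t\leftrightarrow Nt$; and the rules modus ponens and (N): from $A$ infer $N\neg A$. *)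

(* Defs.v *)
From Stdlib Require Import Arith Bool.

Inductive form : Type :=
| Atom : nat -> form
| Top : form
| Bot : form
| TT : form
| Neg : form -> form
| And : form -> form -> form
| Or : form -> form -> form
| Imp : form -> form -> form
| Nm : form -> form.

Definition Iff (A B : form) : form := And (Imp A B) (Imp B A).

(* Classical propositional evaluation in which atoms, t and every formula
   of the form N A are treated as propositional variables. *)
Fixpoint ceval (va : nat -> bool) (vt : bool) (vn : form -> bool) (A : form) : bool :=
  match A with
  | Atom n => va n
  | Top => true
  | Bot => false
  | TT => vt
  | Neg B => negb (ceval va vt vn B)
  | And B C => ceval va vt vn B && ceval va vt vn C
  | Or B C => ceval va vt vn B || ceval va vt vn C
  | Imp B C => implb (ceval va vt vn B) (ceval va vt vn C)
  | Nm B => vn B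
  end.

Definition tautology (A : form) : Prop :=
  forall va vt vn, ceval va vt vn A = true.

Inductive prov : form -> Prop :=
| ax_taut : forall A, tautology A -> prov A
| ax_K : forall A B, prov (Iff (Nm (And A B)) (Or (Nm A) (Nm B)))
| ax_F : forall A, prov (Iff (Neg (Nm A)) (Nm (Neg A)))
| ax_C : forall A, prov (Imp A (Nm (Nm A)))
| ax_A : forall p, prov (Imp TT (Imp (Atom p) (Nm (Neg (Atom p)))))
| ax_T : prov (Iff TT (Nm TT))
| r_mp : forall A B, prov (Imp A B) -> prov A -> prov B
| r_N : forall A, prov A -> prov (Nm (Neg A)).

Fixpoint subst (p : nat) (B : form) (A : form) : form :=
  match A with
  | Atom n => if Nat.eqb n p then B else Atom n
  | Top => Top
  | Bot => Bot
  | TT => TT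
  | Neg C => Neg (subst p B C)
  | And C D => And (subst p B C) (subst p B D)
  | Or C D => Or (subst p B C) (subst p B D)
  | Imp C D => Imp (subst p B C) (subst p B D)
  | Nm C => Nm (subst p B C)
  end.

(* Main.v *)
Require Import Defs.
From Stdlib Require Import Arith Bool.

Ltac taut_solve :=
  intros ? ? ?; simpl;
  repeat match goal with
  | |- context [ceval ?a ?b ?c ?X] => destruct (ceval a b c X)
  | |- context [?c (Nm ?X)] => destruct (c (Nm X))
  | |- context [?c (Neg ?X)] => destruct (c (Neg X))
  | |- context [?c (And ?X ?Y)] => destruct (c (And X Y))
  | |- context [?c ?X] => match type of c with form -> bool => destruct (c X) end
  | |- context [?c ?X] => match type of c with nat -> bool => destruct (c X) end
  | v : bool |- _ => destruct v
  end; reflexivity.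

Lemma mp1 A B : prov (Imp A B) -> prov A -> prov B.
Proof. apply r_mp. Qed.

Lemma mp2 A B D : prov (Imp A (Imp B D)) -> prov A -> prov B -> prov D.
Proof. intros H a b. eapply r_mp; [eapply r_mp; eauto| eauto]. Qed.

Lemma mp3 A B E D : prov (Imp A (Imp B (Imp E D))) -> prov A -> prov B -> prov E -> prov D.
Proof. intros H a b e. eapply mp2; [eapply r_mp; eauto|eauto|eauto]. Qed.

Lemma antimono X Y : prov (Imp X Y) -> prov (Imp (Nm Y) (Nm X)).
Proof.
  intros H.
  set (Z := And X (Neg Y)).
  assert (H1 : prov (Neg Z)).
  { eapply mp1; [|exact H]. apply ax_taut. unfold Z. taut_solve. }
  apply r_N in H1.
  assert (H2 : prov (Nm Z)).
  { eapply mp3; [| exact H1 | exact (ax_F (Neg Z)) | exact (ax_F Z)].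
    apply ax_taut. unfold Iff. taut_solve. }
  eapply mp3; [| exact H2 | exact (ax_K X (Neg Y)) | exact (ax_F Y)].
  apply ax_taut. unfold Iff, Z. taut_solve.
Qed.

Lemma congN X Y : prov (Iff X Y) -> prov (Iff (Nm X) (Nm Y)).
Proof.
  intros H.
  assert (a : prov (Imp X Y)).
  { eapply mp1; [|exact H]. apply ax_taut. unfold Iff. taut_solve. }
  assert (b : prov (Imp Y X)).
  { eapply mp1; [|exact H]. apply ax_taut. unfold Iff. taut_solve. }
  apply antimono in a. apply antimono in b.
  eapply mp2; [| exact b | exact a]. apply ax_taut. unfold Iff. taut_solve.
Qed.

Theorem theorem33 (B C : form) (p : nat) (A : form) :
  prov (Iff B C) -> prov (Iff (subst p B A) (subst p C A)).
Proof.
  intros H. induction A; simpl.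
  - destruct (Nat.eqb n p); [exact H|]. apply ax_taut. unfold Iff. taut_solve.
  - apply ax_taut. unfold Iff. taut_solve.
  - apply ax_taut. unfold Iff. taut_solve.
  - apply ax_taut. unfold Iff. taut_solve.
  - eapply mp1; [|exact IHA]. apply ax_taut. unfold Iff. taut_solve.
  - eapply mp2; [|exact IHA1|exact IHA2]. apply ax_taut. unfold Iff. taut_solve.
  - eapply mp2; [|exact IHA1|exact IHA2]. apply ax_taut. unfold Iff. taut_solve.
  - eapply mp2; [|exact IHA1|exact IHA2]. apply ax_taut. unfold Iff. taut_solve.
  - apply congN, IHA.
Qed.
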